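(* The following are equivalent for any structures $\mathcal{M}$ and $\mathcal{N}$. (1) $\mathcal{N}$ locally trace defines $\mathcal{M}$. (2) For every $k\ge 2$, every $\mathcal{M}$-definable $k$-hypergraph embeds into an $\mathcal{N}$-definable $k$-hypergraph. (3) For every $k\ge 2$, every $k$-hypergraph that is zero-definable in $\mathcal{M}$ embeds into a $k$-hypergraph that is zero-definable in $\mathcal{N}$.
   Context: ''Definable'' means first-order definable with parameters; ''zero-definable'' means definable without parameters. A $k$-hypergraph is a set with a symmetric $k$-ary relation $E$ such that $E(a_1,\dots,a_k)$ implies the $a_i$ are distinct. An $\mathcal{M}$-definable $k$-hypergraph is one whose vertex set is an $\mathcal{M}$-definable set (a definable subset of some $M^d$) and whose relation is $\mathcal{M}$-definable; embeddings are injective maps preserving and reflecting the relation. $\mathcal{N}$ locally trace defines $\mathcal{M}$ if there is a possibly infinite collection $\mathcal{E}$ of functions $M\to N$ such that every $\mathcal{M}$-definable subset of every $M^m$ is of the form $\{(a_1,\dots,a_m) : (f_1(a_{i_1}),\dots,f_n(a_{i_n}))\in Y\}$ for some $f_1,\dots,f_n\in\mathcal{E}$, $i_1,\dots,i_n\in\{1,\dots,m\}$ and $\mathcal{N}$-definable $Y\subseteq N^n$. *)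

(* Defs.v *)
From mathcomp Require Import all_boot all_algebra perm.
Set Implicit Arguments. Unset Strict Implicit. Unset Printing Implicit Defensive.

Record signature := Signature {
  fsym : Type; farity : fsym -> nat;      (* function symbols (constants: arity 0) *)
  rsym : Type; rarity : rsym -> nat }.

(* A structure; carriers are nonempty (standard model-theoretic convention). *)
Record structure (L : signature) := Structure {
  carrier :> Type;
  witness : carrier;
  sfun : forall f : fsym L, ('I_(farity f) -> carrier) -> carrier;
  srel : forall r : rsym L, ('I_(rarity r) -> carrier) -> Prop }.

Inductive term (L : signature) : Type :=
  | Tvar : nat -> term L
  | Tapp : forall f : fsym L, ('I_(farity f) -> term L) -> term L.

Inductive formula (L : signature) : Type :=
  | Feq  : term L -> term L -> formula L
  | Frel : forall r : rsym L, ('I_(rarity r) -> term L) -> formula L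
  | Fbot : formula L
  | Fnot : formula L -> formula L
  | Fand : formula L -> formula L -> formula L
  | For  : formula L -> formula L -> formula L
  | Fimp : formula L -> formula L -> formula L
  | Fex  : nat -> formula L -> formula L
  | Fall : nat -> formula L -> formula L.

Section Semantics.
Variables (L : signature) (M : structure L).

Fixpoint eval_term (s : nat -> M) (t : term L) : M :=
  match t with
  | Tvar n => s n
  | Tapp f args => sfun (fun i => eval_term s (args i))
  end.

Definition upd (s : nat -> M) (n : nat) (a : M) : nat -> M :=
  fun i => if i == n then a else s i.

Fixpoint sat (s : nat -> M) (phi : formula L) : Prop :=
  match phi with
  | Feq t u => eval_term s t = eval_term s u
  | Frel r args => srel (fun i => eval_term s (args i))
  | Fbot => False
  | Fnot p => ~ sat s p
  | Fand p q => sat s p /\ sat s q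
  | For p q => sat s p \/ sat s q
  | Fimp p q => sat s p -> sat s q
  | Fex n p => exists a : M, sat (upd s n a) p
  | Fall n p => forall a : M, sat (upd s n a) p
  end.

Definition ext (m : nat) (a : 'I_m -> M) (s : nat -> M) : nat -> M :=
  fun i => match (insub i : option 'I_m) with Some j => a j | None => s i end.

(* X ⊆ M^m is definable with parameters: the parameters are the values
   of the variables >= m under some assignment s. *)
Definition definable (m : nat) (X : ('I_m -> M) -> Prop) : Prop :=
  exists (phi : formula L) (s : nat -> M),
    forall a : 'I_m -> M, X a <-> sat (ext a s) phi.

Definition zdefinable (m : nat) (X : ('I_m -> M) -> Prop) : Prop :=
  exists phi : formula L,
    forall (a : 'I_m -> M) (s : nat -> M), X a <-> sat (ext a s) phi.

End Semantics.

Definition is_hypergraph (V : Type) (k : nat) (D : V -> Prop)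
    (E : ('I_k -> V) -> Prop) : Prop :=
  (forall a, E a -> forall i, D (a i)) /\
  (forall (a : 'I_k -> V) (sigma : 'S_k), E a <-> E (a \o sigma)) /\
  (forall a, E a -> forall i j, a i = a j -> i = j).

Definition hyp_embedding (V W : Type) (k : nat) (D : V -> Prop)
    (E : ('I_k -> V) -> Prop) (D' : W -> Prop) (E' : ('I_k -> W) -> Prop)
    (f : V -> W) : Prop :=
  (forall x, D x -> D' (f x)) /\
  (forall x y, D x -> D y -> f x = f y -> x = y) /\
  (forall a : 'I_k -> V, (forall i, D (a i)) -> (E a <-> E' (f \o a))).

Definition hyp_embeds (V W : Type) (k : nat) (D : V -> Prop)
    (E : ('I_k -> V) -> Prop) (D' : W -> Prop) (E' : ('I_k -> W) -> Prop)
    : Prop := exists f : V -> W, hyp_embedding D E D' E' f.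

(* A k-tuple of points of M^d, viewed as a point of M^(k*d). *)
Definition unflat (M : Type) (k d : nat) (c : 'I_(k * d) -> M) : 'I_k -> 'I_d -> M :=
  fun i j => c (mxvec_index i j).

Definition def_hypergraph (L : signature) (M : structure L) (k d : nat)
    (D : ('I_d -> M) -> Prop) (E : ('I_k -> 'I_d -> M) -> Prop) : Prop :=
  is_hypergraph D E /\ definable D /\
  definable (fun c : 'I_(k * d) -> M => E (unflat c)).

Definition zdef_hypergraph (L : signature) (M : structure L) (k d : nat)
    (D : ('I_d -> M) -> Prop) (E : ('I_k -> 'I_d -> M) -> Prop) : Prop :=
  is_hypergraph D E /\ zdefinable D /\
  zdefinable (fun c : 'I_(k * d) -> M => E (unflat c)).

Definition locally_trace_defines (LN LM : signature)
    (N : structure LN) (M : structure LM) : Prop :=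
  exists Fam : (M -> N) -> Prop,
    forall (m : nat) (X : ('I_m -> M) -> Prop), definable X ->
      exists (n : nat) (f : 'I_n -> M -> N) (idx : 'I_n -> 'I_m)
             (Y : ('I_n -> N) -> Prop),
        (forall j, Fam (f j)) /\ definable Y /\
        forall a : 'I_m -> M, X a <-> Y (fun j => f j (a (idx j))).

(* Main.v *)
Require Import Defs.
From mathcomp Require Import all_boot all_algebra perm.
From Stdlib Require Import FunctionalExtensionality Classical.
Set Implicit Arguments. Unset Strict Implicit. Unset Printing Implicit Defensive.

Lemma split_lshift m n (j : 'I_m) : split (lshift n j) = inl j.
Proof. exact: (unsplitK (inl j : 'I_m + 'I_n)). Qed.
Lemma split_rshift m n (j : 'I_n) : split (rshift m j) = inr j.
Proof. exact: (unsplitK (inr j : 'I_m + 'I_n)). Qed.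

Section Lib.
Variables (L : signature) (A : structure L).

Fixpoint tbound (t : term L) : nat :=
  match t with
  | Tvar n => n.+1
  | Tapp f args => \max_(i < farity f) tbound (args i)
  end.

Fixpoint fbound (p : formula L) : nat :=
  match p with
  | Feq t u => maxn (tbound t) (tbound u)
  | Frel r args => \max_(i < rarity r) tbound (args i)
  | Fbot => 0
  | Fnot p => fbound p
  | Fand p q => maxn (fbound p) (fbound q)
  | For p q => maxn (fbound p) (fbound q)
  | Fimp p q => maxn (fbound p) (fbound q)
  | Fex _ p => fbound p
  | Fall _ p => fbound p
  end.

Lemma eval_bound (t : term L) (s u : nat -> A) :
  (forall i, i < tbound t -> s i = u i) -> eval_term s t = eval_term u t.
Proof.
elim: t s u => [n|f args IH] s u H /=; first by apply: H.
congr sfun; apply: functional_extensionality => i; apply: IH => j Hj.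
  apply: H; apply: leq_trans Hj _; exact: (@leq_bigmax _ (fun i => tbound (args i)) i).
Qed.

Lemma sat_bound (p : formula L) (s u : nat -> A) :
  (forall i, i < fbound p -> s i = u i) -> (sat s p <-> sat u p).
Proof.
elim: p s u => [t1 t2|r args| |p IH|p IHp q IHq|p IHp q IHq|p IHp q IHq|n p IH|n p IH] s u H /=.
- rewrite (@eval_bound t1 s u) ?(@eval_bound t2 s u) //.
  + by move=> i Hi; apply: H; rewrite leq_max Hi orbT.
  + by move=> i Hi; apply: H; rewrite leq_max Hi.
- have -> : (fun i => eval_term s (args i)) = (fun i => eval_term u (args i)) => //.
  apply: functional_extensionality => i; apply: eval_bound => j Hj.
  apply: H; apply: leq_trans Hj _; exact: (@leq_bigmax _ (fun i => tbound (args i)) i).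
- by [].
- by rewrite (IH s u).
- rewrite (IHp s u) ?(IHq s u) //.
  + by move=> i Hi; apply: H; rewrite leq_max Hi orbT.
  + by move=> i Hi; apply: H; rewrite leq_max Hi.
- rewrite (IHp s u) ?(IHq s u) //.
  + by move=> i Hi; apply: H; rewrite leq_max Hi orbT.
  + by move=> i Hi; apply: H; rewrite leq_max Hi.
- rewrite (IHp s u) ?(IHq s u) //.
  + by move=> i Hi; apply: H; rewrite leq_max Hi orbT.
  + by move=> i Hi; apply: H; rewrite leq_max Hi.
- have Hu : forall a, sat (upd s n a) p <-> sat (upd u n a) p.
    by move=> a; apply: IH => i Hi; rewrite /upd; case: eqP => // _; exact: H.
  by split=> [[a Ha]|[a Ha]]; exists a; apply/Hu.
- have Hu : forall a, sat (upd s n a) p <-> sat (upd u n a) p.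
    by move=> a; apply: IH => i Hi; rewrite /upd; case: eqP => // _; exact: H.
  by split=> Ha a; apply/Hu.
Qed.

Fixpoint tren (rho : nat -> nat) (t : term L) : term L :=
  match t with
  | Tvar n => Tvar L (rho n)
  | Tapp f args => Tapp (fun i => tren rho (args i))
  end.

Fixpoint fren (rho : nat -> nat) (p : formula L) : formula L :=
  match p with
  | Feq t u => Feq (tren rho t) (tren rho u)
  | Frel r args => Frel (fun i => tren rho (args i))
  | Fbot => Fbot L
  | Fnot p => Fnot (fren rho p)
  | Fand p q => Fand (fren rho p) (fren rho q)
  | For p q => For (fren rho p) (fren rho q)
  | Fimp p q => Fimp (fren rho p) (fren rho q)
  | Fex n p => Fex (rho n) (fren rho p)
  | Fall n p => Fall (rho n) (fren rho p)
  end.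

Lemma eval_ren rho (t : term L) (s : nat -> A) :
  eval_term s (tren rho t) = eval_term (s \o rho) t.
Proof.
elim: t => [n|f args IH] //=; congr sfun; apply: functional_extensionality => i; exact: IH.
Qed.

Lemma upd_ren rho (s : nat -> A) n a : injective rho ->
  (upd s (rho n) a) \o rho = upd (s \o rho) n a.
Proof.
move=> Hr; apply: functional_extensionality => i; rewrite /upd /= inj_eq //.
Qed.

Lemma sat_ren rho (p : formula L) (s : nat -> A) : injective rho ->
  (sat s (fren rho p) <-> sat (s \o rho) p).
Proof.
move=> Hr; elim: p s => [t1 t2|r args| |p IH|p IHp q IHq|p IHp q IHq|p IHp q IHq|n p IH|n p IH] s /=.
- by rewrite !eval_ren.
- have -> : (fun i => eval_term s (tren rho (args i))) = (fun i => eval_term (s \o rho) (args i)) => //.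
  by apply: functional_extensionality => i; rewrite eval_ren.
- by [].
- by rewrite IH.
- by rewrite IHp IHq.
- by rewrite IHp IHq.
- by rewrite IHp IHq.
- by split=> [[a Ha]|[a Ha]]; exists a; move: Ha; rewrite IH upd_ren.
- by split=> Ha a; move: (Ha a); rewrite IH upd_ren.
Qed.

Lemma sat_exlist (l : seq nat) (p : formula L) (s : nat -> A) :
  sat s (foldr (@Fex L) p l) <->
  exists t : nat -> A, (forall i, i \notin l -> t i = s i) /\ sat t p.
Proof.
elim: l s => [|v l IH] s /=.
- split=> [H|[t [Ht H]]]; first by exists s.
  by have -> : s = t by apply: functional_extensionality => i; rewrite Ht.
- split=> [[x /IH [t [Ht H]]]|[t [Ht H]]].
  + exists t; split => // i; rewrite in_cons negb_or => /andP [Hiv Hil].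
    by rewrite Ht // /upd (negbTE Hiv).
  + exists (t v); apply/IH; exists t; split => // i Hi; rewrite /upd.
    case: eqP => [->|/eqP Hiv] //; apply: Ht; by rewrite in_cons negb_or Hiv.
Qed.

Definition FD (S : (nat -> A) -> Prop) := exists p : formula L, forall s, S s <-> sat s p.

Lemma FD_iff S S' : FD S -> (forall s, S s <-> S' s) -> FD S'.
Proof. by move=> [p Hp] H; exists p => s; rewrite -H. Qed.

Lemma FD_and S S' : FD S -> FD S' -> FD (fun s => S s /\ S' s).
Proof. by move=> [p Hp] [q Hq]; exists (Fand p q) => s /=; rewrite Hp Hq. Qed.
Lemma FD_or S S' : FD S -> FD S' -> FD (fun s => S s \/ S' s).
Proof. by move=> [p Hp] [q Hq]; exists (For p q) => s /=; rewrite Hp Hq. Qed.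
Lemma FD_imp S S' : FD S -> FD S' -> FD (fun s => S s -> S' s).
Proof. by move=> [p Hp] [q Hq]; exists (Fimp p q) => s /=; rewrite Hp Hq. Qed.
Lemma FD_not S : FD S -> FD (fun s => ~ S s).
Proof. by move=> [p Hp]; exists (Fnot p) => s /=; rewrite Hp. Qed.
Lemma FD_False : FD (fun _ => False).
Proof. by exists (Fbot L). Qed.
Lemma FD_True : FD (fun _ => True).
Proof. by exists (Fnot (Fbot L)) => s; split => // _ []. Qed.
Lemma FD_prop (P : Prop) : FD (fun _ => P).
Proof.
case: (classic P) => HP; [apply: FD_iff FD_True _ | apply: FD_iff FD_False _]; by [].
Qed.
Lemma FD_eq i j : FD (fun s => s i = s j).
Proof. by exists (Feq (Tvar L i) (Tvar L j)). Qed.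

Lemma FD_sat p : FD (fun s => sat s p).
Proof. by exists p. Qed.

Lemma FD_bounded S : FD S -> exists B, forall s u, (forall i, i < B -> s i = u i) -> (S s <-> S u).
Proof. by move=> [p Hp]; exists (fbound p) => s u H; rewrite !Hp; apply: sat_bound. Qed.

Lemma FD_forall_seq (T : eqType) (S : T -> (nat -> A) -> Prop) (l : seq T) :
  (forall x, FD (S x)) -> FD (fun s => forall x, x \in l -> S x s).
Proof.
move=> H; elim: l => [|y l IH].
  by apply: FD_iff FD_True _ => s; split.
apply: FD_iff (FD_and (H y) IH) _ => s; split.
- by move=> [Hy Hl] x; rewrite in_cons => /orP [/eqP ->|]; [|apply: Hl].
- by move=> Hx; split; [apply: Hx; rewrite mem_head | move=> x Hxl; apply: Hx; rewrite in_cons Hxl orbT].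
Qed.

Lemma FD_forall (T : finType) (S : T -> (nat -> A) -> Prop) :
  (forall x, FD (S x)) -> FD (fun s => forall x, S x s).
Proof.
move=> H; apply: FD_iff (FD_forall_seq (enum T) H) _ => s; split.
- by move=> Hx x; apply: Hx; rewrite mem_enum.
- by move=> Hx x _.
Qed.

Lemma FD_exists (T : finType) (S : T -> (nat -> A) -> Prop) :
  (forall x, FD (S x)) -> FD (fun s => exists x, S x s).
Proof.
move=> H; have := FD_not (FD_forall (fun x => FD_not (H x))).
move/FD_iff; apply => s; split.
- by move=> Hn; apply: NNPP => Hc; apply: Hn => x Hx; apply: Hc; exists x.
- by move=> [x Hx] Hn; exact: Hn x Hx.
Qed.

Lemma FD_exlist S (l : seq nat) : FD S ->
  FD (fun s => exists t : nat -> A, (forall i, i \notin l -> t i = s i) /\ S t).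
Proof.
move=> [p Hp]; exists (foldr (@Fex L) p l) => s; rewrite sat_exlist.
by split=> [[t [H1 H2]]|[t [H1 H2]]]; exists t; split=> //; apply/Hp.
Qed.

Lemma FD_shift S K : FD S -> FD (fun s => S (fun i => s (i + K))).
Proof.
move=> [p Hp]; exists (fren (fun i => i + K) p) => s; rewrite sat_ren; last exact: addIn.
by rewrite Hp.
Qed.

Lemma FD_comp S (sigma : nat -> nat) : FD S -> FD (fun s => S (s \o sigma)).
Proof.
move=> HS; have [B HB] := FD_bounded HS.
pose K := (\max_(i < B) sigma i).+1.
have HsK : forall i, i < B -> sigma i < K.
  by move=> i Hi; rewrite ltnS; exact: (@leq_bigmax _ (fun i : 'I_B => sigma i) (Ordinal Hi)).
pose S2 := fun t : nat -> A => (forall i : 'I_B, t (i + K) = t (sigma i)) /\ S (fun i => t (i + K)).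
have FS2 : FD S2.
  apply: FD_and; last exact: FD_shift.
  by apply: FD_forall => i; apply: FD_eq.
apply: FD_iff (FD_exlist (iota K B) FS2) _ => s; split.
- move=> [t [Ht [Heq HSt]]]; apply: (proj2 (HB _ (fun i => t (i + K)) _)) HSt => i Hi /=.
  rewrite (Heq (Ordinal Hi)) /= Ht // mem_iota negb_and. 
  by rewrite -ltnNge HsK.
- move=> H; exists (fun i => if (K <= i) && (i < K + B) then s (sigma (i - K)) else s i).
  split; [|split].
  + by move=> i; rewrite mem_iota => /negbTE ->.
  + move=> i /=; rewrite leq_addl addnC ltn_add2l ltn_ord /= addKn.
    by rewrite leqNgt HsK.
  + apply: (proj1 (HB (s \o sigma) _ _)) H => i Hi /=.
    by rewrite leq_addl addnC ltn_add2l Hi addKn.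
Qed.


Lemma extE m (a : 'I_m -> A) s (i : 'I_m) : ext a s i = a i.
Proof. by rewrite /ext valK. Qed.
Lemma extE' m (a : 'I_m -> A) s i : m <= i -> ext a s i = s i.
Proof. by move=> H; rewrite /ext insubF // ltnNge H. Qed.

Definition tup m (s : nat -> A) : 'I_m -> A := fun i => s i.
Arguments tup : clear implicits.

Lemma ext_tup m (s : nat -> A) : ext (tup m s) s = s.
Proof.
apply: functional_extensionality => i; case: (ltnP i m) => H.
- by rewrite (extE _ _ (Ordinal H)).
- by rewrite extE'.
Qed.

Lemma tup_ext m (a : 'I_m -> A) s : tup m (ext a s) = a.
Proof. by apply: functional_extensionality => i; rewrite /tup extE. Qed.

Lemma zdef_FD m (X : ('I_m -> A) -> Prop) :
  zdefinable X <-> FD (fun s => X (tup m s)).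
Proof.
split=> [[p Hp]|[p Hp]].
- by exists p => s; rewrite (Hp _ s) ext_tup.
- by exists p => a s; rewrite -Hp tup_ext.
Qed.

Lemma Z_iff m (X Y : ('I_m -> A) -> Prop) : zdefinable X -> (forall a, X a <-> Y a) -> zdefinable Y.
Proof. by move=> /zdef_FD H HXY; apply/zdef_FD; apply: FD_iff H _ => s; apply: HXY. Qed.
Lemma Z_and m (X Y : ('I_m -> A) -> Prop) : zdefinable X -> zdefinable Y -> zdefinable (fun a => X a /\ Y a).
Proof. by move=> /zdef_FD H1 /zdef_FD H2; apply/zdef_FD; apply: FD_and. Qed.
Lemma Z_or m (X Y : ('I_m -> A) -> Prop) : zdefinable X -> zdefinable Y -> zdefinable (fun a => X a \/ Y a).
Proof. by move=> /zdef_FD H1 /zdef_FD H2; apply/zdef_FD; apply: FD_or. Qed.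
Lemma Z_imp m (X Y : ('I_m -> A) -> Prop) : zdefinable X -> zdefinable Y -> zdefinable (fun a => X a -> Y a).
Proof. by move=> /zdef_FD H1 /zdef_FD H2; apply/zdef_FD; apply: FD_imp. Qed.
Lemma Z_not m (X : ('I_m -> A) -> Prop) : zdefinable X -> zdefinable (fun a => ~ X a).
Proof. by move=> /zdef_FD H1; apply/zdef_FD; apply: FD_not. Qed.
Lemma Z_prop m (P : Prop) : zdefinable (fun a : 'I_m -> A => P).
Proof. by apply/zdef_FD; apply: FD_prop. Qed.
Lemma Z_eq m (i j : 'I_m) : zdefinable (fun a : 'I_m -> A => a i = a j).
Proof. by apply/zdef_FD; apply: FD_eq. Qed.
Lemma Z_forall m (T : finType) (X : T -> ('I_m -> A) -> Prop) :
  (forall x, zdefinable (X x)) -> zdefinable (fun a => forall x, X x a).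
Proof. by move=> H; apply/zdef_FD; apply: FD_forall => x; apply/zdef_FD. Qed.
Lemma Z_exists m (T : finType) (X : T -> ('I_m -> A) -> Prop) :
  (forall x, zdefinable (X x)) -> zdefinable (fun a => exists x, X x a).
Proof. by move=> H; apply/zdef_FD; apply: FD_exists => x; apply/zdef_FD. Qed.

Lemma Z_pre n m (X : ('I_n -> A) -> Prop) (r : 'I_n -> 'I_m) :
  zdefinable X -> zdefinable (fun a : 'I_m -> A => X (a \o r)).
Proof.
move=> /zdef_FD H; apply/zdef_FD.
pose sigma := fun i => if insub i is Some j then val (r j) else 0.
apply: FD_iff (FD_comp sigma H) _ => s.
have -> // : tup n (s \o sigma) = tup m s \o r.
by apply: functional_extensionality => i; rewrite /tup /sigma /= valK.
Qed.

Lemma zdef_def m (X : ('I_m -> A) -> Prop) : zdefinable X -> definable X.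
Proof. by move=> [p Hp]; exists p, (fun _ => witness A) => a; apply: Hp. Qed.

Definition catt T n P (y : 'I_n -> T) (p : 'I_P -> T) : 'I_(n + P) -> T :=
  fun i => match split i with inl j => y j | inr q => p q end.

Lemma catt_lshift T n P (y : 'I_n -> T) (p : 'I_P -> T) j : catt y p (lshift P j) = y j.
Proof. by rewrite /catt split_lshift. Qed.
Lemma catt_rshift T n P (y : 'I_n -> T) (p : 'I_P -> T) j : catt y p (rshift n j) = p j.
Proof. by rewrite /catt split_rshift. Qed.

Lemma ext_catt n P (y y' : 'I_n -> A) (p : 'I_P -> A) w :
  ext (catt y p) w = ext y (ext (catt y' p) w).
Proof.
apply: functional_extensionality => i.
case: (ltnP i (n + P)) => H.
- rewrite (extE _ _ (Ordinal H)); case: (ltnP i n) => H2.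
  + rewrite (extE _ _ (Ordinal H2)) /catt; case: splitP => [j /= Hj|k /= Hk].
    * by congr y; apply: val_inj.
    * by exfalso; move: H2; rewrite Hk ltnNge leq_addr.
  + rewrite extE' // (extE _ _ (Ordinal H)) /catt; case: splitP => [j /= Hj|k //].
    by exfalso; move: H2; rewrite Hj leqNgt ltn_ord.
- rewrite extE' // extE' ?extE' //; apply: leq_trans H; exact: leq_addr.
Qed.

Lemma Dz n (Y : ('I_n -> A) -> Prop) : definable Y ->
  exists P (p : 'I_P -> A) (X0 : ('I_(n + P) -> A) -> Prop),
    zdefinable X0 /\ forall y, Y y <-> X0 (catt y p).
Proof.
move=> [phi [s Hs]].
exists (fbound phi), (fun q => s (n + q)), (fun a => sat (ext a s) phi); split.
- apply/zdef_FD; apply: FD_iff (FD_sat phi) _ => t; symmetry; apply: sat_bound => i Hi.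
  have Hi' : i < n + fbound phi by apply: leq_trans Hi _; exact: leq_addl.
  by rewrite (extE _ _ (Ordinal Hi')).
- move=> y; rewrite Hs; apply: sat_bound => i Hi.
  have Hi' : i < n + fbound phi by apply: leq_trans Hi _; exact: leq_addl.
  rewrite [RHS](extE _ _ (Ordinal Hi')) /catt; case: splitP => [j /= Hj|k /= Hk].
  + by rewrite Hj extE.
  + by rewrite Hk extE' // leq_addr.
Qed.

Lemma zD n P (X0 : ('I_(n + P) -> A) -> Prop) (p : 'I_P -> A) :
  zdefinable X0 -> definable (fun y => X0 (catt y p)).
Proof.
move=> [phi Hphi].
exists phi, (ext (catt (fun _ : 'I_n => witness A) p) (fun _ => witness A)) => y.
by rewrite (Hphi _ (fun _ => witness A)) (ext_catt y (fun _ => witness A)).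
Qed.

Lemma def_subst Mm n (Z : ('I_Mm -> A) -> Prop) (h : 'I_Mm -> 'I_n + A) :
  definable Z ->
  definable (fun z : 'I_n -> A => Z (fun x => match h x with inl j => z j | inr c => c end)).
Proof.
move=> /Dz [P [p [Z0 [HZ0 HZ]]]].
pose cst := fun x => match h x with inl _ => witness A | inr c => c end.
pose q := catt cst p.
pose r := fun x : 'I_(Mm + P) => match split x with
  | inl x' => match h x' with inl j => lshift (Mm + P) j | inr _ => rshift n (lshift P x') end
  | inr y => rshift n (rshift Mm y) end.
have [phi [s Hs]] := zD q (Z_pre r HZ0); exists phi, s => z.
rewrite -Hs HZ /=; have -> // : catt (fun x => match h x with inl j => z j | inr c => c end) p
   = catt z q \o r.
apply: functional_extensionality => x; rewrite /= /r /catt.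
case: (split x) => [x'|y].
- rewrite /cst; case E: (h x') => [j|c].
  + by rewrite split_lshift.
  + by rewrite split_rshift /q /catt split_lshift /cst E.
- rewrite split_rshift. rewrite /q /catt. by rewrite split_rshift.
Qed.

End Lib.

Definition decode k d (y : 'I_(k * d)) : 'I_k * 'I_d :=
  enum_val (cast_ord (esym (mxvec_cast k d)) y).

Lemma decodeK k d (i : 'I_k) (l : 'I_d) : decode (mxvec_index i l) = (i, l).
Proof. by rewrite /decode /mxvec_index cast_ordK enum_rankK. Qed.

Lemma mx_decode k d (y : 'I_(k * d)) : mxvec_index (decode y).1 (decode y).2 = y.
Proof. by rewrite /decode /mxvec_index -surjective_pairing enum_valK cast_ordKV. Qed.

Lemma unflat_flat (T : Type) k d (b : 'I_k -> 'I_d -> T) :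
  unflat (fun y : 'I_(k * d) => b (decode y).1 (decode y).2) = b.
Proof.
apply: functional_extensionality => i; apply: functional_extensionality => l.
by rewrite /unflat decodeK.
Qed.


Section Forward.
Variables (LM LN : signature) (M : structure LM) (N : structure LN).

Lemma eq_definable : definable (fun a : 'I_2 -> M => a ord0 = a ord_max).
Proof. by apply: zdef_def; apply: Z_eq. Qed.

Lemma forward : locally_trace_defines N M ->
  forall (k d : nat) (D : ('I_d -> M) -> Prop) (E : ('I_k -> 'I_d -> M) -> Prop),
      2 <= k -> def_hypergraph D E ->
      exists (e : nat) (D' : ('I_e -> N) -> Prop) (E' : ('I_k -> 'I_e -> N) -> Prop),
        zdef_hypergraph D' E' /\ hyp_embeds D E D' E'.
Proof.
move=> [Fam HF] k d D E Hk [[HED [Hsym Hdist]] [HD HE]].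
have i0 : 'I_k by exists 0; apply: leq_trans Hk.
have [n1 [f1 [idx1 [Y1 [_ [HY1 H1]]]]]] := HF d D HD.
have [n2 [f2 [idx2 [Y2 [_ [HY2 H2]]]]]] := HF (k * d) (fun c => E (unflat c)) HE.
have [n3 [f3 [idx3 [Y3 [_ [HY3 H3]]]]]] := HF 2 _ eq_definable.
have [P1 [p1 [Z1 [HZ1 HYZ1]]]] := Dz HY1.
have [P2 [p2 [Z2 [HZ2 HYZ2]]]] := Dz HY2.
have inj3 : forall x y : M, (forall j, f3 j x = f3 j y) -> x = y.
  move=> x y Hxy.
  pose a1 := fun _ : 'I_2 => x.
  pose a2 := fun i : 'I_2 => if i == ord0 then x else y.
  have Heq : (fun j => f3 j (a1 (idx3 j))) = (fun j => f3 j (a2 (idx3 j))).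
    apply: functional_extensionality => j; rewrite /a1 /a2; case: (_ == _) => //.
  have : a2 ord0 = a2 ord_max.
    apply/H3; rewrite -Heq; apply/H3; by [].
  by rewrite /a2 /=.
pose J := (('I_n1 + 'I_n2) + 'I_n3)%type.
pose F := fun j : J => match j with inl (inl j) => f1 j | inl (inr j) => f2 j | inr j => f3 j end.
pose T := ((J * 'I_d) + ('I_P1 + 'I_P2))%type.
pose G := fun (v : 'I_d -> M) (t : T) => match t with
  | inl (j, l) => F j (v l) | inr (inl q) => p1 q | inr (inr q) => p2 q end.
pose e := #|{: T}|.
pose g := fun (v : 'I_d -> M) (c : 'I_e) => G v (enum_val c).
have gE : forall v t, g v (enum_rank t) = G v t by move=> v t; rewrite /g enum_rankK.
pose r1 := fun x : 'I_(n1 + P1) => enum_rank (match split x with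
   | inl j => inl (inl (inl j), idx1 j) | inr q => inr (inl q) end : T).
pose D' := fun w : 'I_e -> N => Z1 (w \o r1).
pose r2 := fun x : 'I_(n2 + P2) => match split x with
   | inl j => ((decode (idx2 j)).1, enum_rank (inl (inl (inr j), (decode (idx2 j)).2) : T))
   | inr q => (i0, enum_rank (inr (inr q) : T)) end.
pose Y2' := fun W : 'I_k -> 'I_e -> N => Z2 (fun x => W (r2 x).1 (r2 x).2).
pose E' := fun W : 'I_k -> 'I_e -> N =>
  (forall i, D' (W i)) /\ (forall i j, W i = W j -> i = j) /\ (forall s : 'S_k, Y2' (fun i => W (s i))).
have HDg : forall v, D v <-> D' (g v).
  move=> v; rewrite H1 HYZ1 /D'; have -> // : catt (fun j => f1 j (v (idx1 j))) p1 = g v \o r1.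
  apply: functional_extensionality => x; rewrite /= /r1 /catt.
  by case: (split x) => [j|q]; rewrite gE.
have Hginj : forall v v', g v = g v' -> v = v'.
  move=> v v' Hvv; apply: functional_extensionality => l; apply: inj3 => j.
  have := congr1 (fun w => w (enum_rank (inl (inr j, l) : T))) Hvv.
  by rewrite /= !gE.
have HEg : forall b : 'I_k -> 'I_d -> M, E b <-> Y2' (fun i => g (b i)).
  move=> b; have := H2 (fun y => b (decode y).1 (decode y).2); rewrite unflat_flat => ->.
  rewrite HYZ2 /Y2'.
  have -> // : catt (fun j => f2 j (b (decode (idx2 j)).1 (decode (idx2 j)).2)) p2
      = (fun x => g (b (r2 x).1) (r2 x).2).
  apply: functional_extensionality => x; rewrite /r2 /catt.
  by case: (split x) => [j|q] /=; rewrite gE.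
exists e, D', E'; split; [split; [|split]|].
-
  split; [|split].
  + by move=> W [HW _].
  + move=> W t; split.
    * move=> [HW1 [HW2 HW3]]; split; [|split].
      - by move=> i; apply: HW1.
      - by move=> i j /= /HW2 /perm_inj.
      - move=> s; have := HW3 (s * t)%g.
        by have -> : (fun i => W ((s * t)%g i)) = (fun i => (W \o t) (s i))
          by apply: functional_extensionality => i; rewrite permM.
    * move=> [HW1 [HW2 HW3]]; split; [|split].
      - by move=> i; have := HW1 (t^-1 i)%g; rewrite /= permKV.
      - move=> i j Hij; have : (t^-1 i)%g = (t^-1 j)%g by apply: HW2; rewrite /= !permKV.
        by move/perm_inj.
      - move=> s; have := HW3 (s * t^-1)%g.
        by have -> : (fun i => (W \o t) ((s * t^-1)%g i)) = (fun i => W (s i))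
          by apply: functional_extensionality => i; rewrite /= permM permKV.
  + by move=> W [_ [HW _]] i j /HW.
- apply: Z_pre; exact: HZ1.
- rewrite /E'; apply: Z_and; [|apply: Z_and].
  + apply: Z_forall => i; have := Z_pre (fun x => mxvec_index i (r1 x)) HZ1.
    move=> HH; exact: (Z_iff HH (fun c => iff_refl _)).
  + apply: Z_forall => i; apply: Z_forall => j.
    have := Z_imp (Z_forall (fun l : 'I_e => @Z_eq _ N _ (mxvec_index i l) (mxvec_index j l))) (@Z_prop _ N (k * e) (i = j)).
    move=> HH; apply: (Z_iff HH) => c.
    split=> H Hc; apply: H.
    * by move=> l; have := congr1 (fun w => w l) Hc.
    * by apply: functional_extensionality => l; apply: Hc.
  + apply: Z_forall => s; have := Z_pre (fun x => mxvec_index (s (r2 x).1) (r2 x).2) HZ2.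
    move=> HH; exact: (Z_iff HH (fun c => iff_refl _)).
- exists g; split; [|split].
  + by move=> v /HDg.
  + by move=> v v' _ _; apply: Hginj.
  + move=> a Ha; split.
    * move=> HEa; split; [|split].
      - by move=> i; apply/HDg/Ha.
      - by move=> i j /= /Hginj Hij; apply: Hdist HEa _ _ Hij.
      - by move=> s; apply/HEg; rewrite -(Hsym a s).
    * move=> [_ [_ H]]; have := H 1%g; rewrite -HEg => HE1.
      by apply/(Hsym a 1%g).
Qed.

End Forward.

Section Backward.
Variables (LM LN : signature) (M : structure LM) (N : structure LN).

Lemma backward :
  (forall (k d : nat) (D : ('I_d -> M) -> Prop) (E : ('I_k -> 'I_d -> M) -> Prop),
      2 <= k -> zdef_hypergraph D E ->
      exists (e : nat) (D' : ('I_e -> N) -> Prop) (E' : ('I_k -> 'I_e -> N) -> Prop),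
        definable (fun c : 'I_(k * e) -> N => E' (unflat c)) /\ hyp_embeds D E D' E') ->
  locally_trace_defines N M.
Proof.
move=> Hyp; exists (fun _ => True) => m X HX.
have [P [p [X0 [HX0 HXX]]]] := Dz HX.
case: (classic (exists u w : M, u <> w)) => [[u [w Huw]]|Hall]; last first.
  have Heq : forall x y : M, x = y.
    by move=> x y; apply: NNPP => Hxy; apply: Hall; exists x, y.
  have idx : 'I_0 -> 'I_m by case.
  exists 0, (fun _ _ => witness N), idx, (fun _ => X (fun _ => witness M)); split; [by []|split].
  - by apply: zdef_def; apply: Z_prop.
  - move=> a; have -> // : a = (fun _ => witness M).
    by apply: functional_extensionality => i; apply: Heq.
pose K := m + P.
pose k := K + 2.
pose C := option (option 'I_k).
pose d := #|{: C}|.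
pose cx := enum_rank (None : C).
pose cy := fun j : 'I_k => enum_rank (Some (Some j) : C).
pose ct := enum_rank (Some None : C).
pose tag := fun (i : 'I_k) (v : 'I_d -> M) => v (cy i) = v ct /\ forall j, j <> i -> v (cy j) <> v ct.
have tag_uniq : forall i j v, tag i v -> tag j v -> i = j.
  move=> i j v [Hi Hi'] [Hj Hj']; apply: NNPP => Hij.
  by apply: (Hi' j) => //; move=> Hji; apply: Hij.
have tagZ : forall i, zdefinable (tag i).
  move=> i; apply: Z_and; first exact: Z_eq.
  apply: Z_forall => j; apply: Z_imp; first exact: Z_prop.
  by apply: Z_not; apply: Z_eq.
pose D := fun v : 'I_d -> M => exists i, tag i v.
pose Eb := fun b : 'I_k -> 'I_d -> M => (forall i, tag i (b i)) /\ X0 (fun x : 'I_K => b (lshift 2 x) cx).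
pose E := fun a : 'I_k -> 'I_d -> M => exists s : 'S_k, Eb (fun i => a (s i)).
have HEtag : forall (a : 'I_k -> 'I_d -> M) (s : 'S_k), Eb (fun i => a (s i)) -> forall i, tag (s^-1 i)%g (a i).
  by move=> a s [Ht _] i; have := Ht (s^-1 i)%g; rewrite permKV.
have Hhyp : zdef_hypergraph D E.
  split; [split; [|split]|split].
  - by move=> a [s Hs] i; exists (s^-1 i)%g; apply: HEtag Hs i.
  - move=> a t; split.
    + move=> [s Hs]; exists (s * t^-1)%g.
      by have -> : (fun i => (a \o t) ((s * t^-1)%g i)) = (fun i => a (s i))
          by apply: functional_extensionality => i; rewrite /= permM permKV.
    + move=> [s Hs]; exists (s * t)%g.
      by have -> : (fun i => a ((s * t)%g i)) = (fun i => (a \o t) (s i))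
          by apply: functional_extensionality => i; rewrite /= permM.
  - move=> a [s Hs] i j Hij.
    have H1 := HEtag a s Hs i; have H2 := HEtag a s Hs j.
    rewrite Hij in H1; have := tag_uniq _ _ _ H1 H2.
    by move/perm_inj.
  - by apply: Z_exists => i; apply: tagZ.
  - apply: Z_exists => s; apply: Z_and.
    + apply: Z_forall => i; have HH := Z_pre (mxvec_index (s i)) (tagZ i).
      exact: (Z_iff HH (fun c => iff_refl _)).
    + have HH := Z_pre (fun x => mxvec_index (s (lshift 2 x)) cx) HX0.
      exact: (Z_iff HH (fun c => iff_refl _)).
have [e [D' [E' [HE' [f [Hf1 [_ Hf3]]]]]]] := Hyp k d D E (leq_addl _ _) Hhyp.
pose vert := fun (i : 'I_k) (x : M) (c : 'I_d) => match enum_val c with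
  | None => x | Some None => u | Some (Some j) => if j == i then u else w end.
have vertE : forall i x t, vert i x (enum_rank t) =
   match t with None => x | Some None => u | Some (Some j) => if j == i then u else w end.
  by move=> i x t; rewrite /vert enum_rankK.
have tag_vert : forall i j x, tag j (vert i x) <-> j = i.
  move=> i j x; rewrite /tag /cy /ct !vertE; split.
  - move=> [H _]; move: H; have [//|Hne] := eqVneq j i.
    by move=> H; exfalso; apply: Huw; rewrite H.
  - move=> ->; rewrite eqxx; split=> // j' Hj'.
    by rewrite vertE (negbTE (introN eqP Hj')) => H; apply: Huw; rewrite H.
have D_vert : forall i x, D (vert i x) by move=> i x; exists i; apply/tag_vert.
pose b0 := fun a : 'I_m -> M => catt (catt a p) (fun _ : 'I_2 => u).
have HXE : forall a, X a <-> E (fun i => vert i (b0 a i)).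
  move=> a; rewrite HXX; split.
  - move=> H; exists 1%g; split.
    + by move=> i; rewrite perm1; apply/tag_vert.
    + have -> // : (fun x : 'I_K => vert ((1%g : 'S_k) (lshift 2 x)) (b0 a ((1%g : 'S_k) (lshift 2 x))) cx)
        = catt a p.
      apply: functional_extensionality => x; rewrite perm1 /cx vertE /b0.
      by rewrite catt_lshift.
  - move=> [s [Ht HX0']].
    have Hs : forall i, s i = i by move=> i; symmetry; apply/(tag_vert (s i) i); apply: Ht.
    move: HX0'.
    have -> // : (fun x : 'I_K => vert (s (lshift 2 x)) (b0 a (s (lshift 2 x))) cx)
        = catt a p.
    apply: functional_extensionality => x; rewrite Hs /cx vertE /b0.
    by rewrite catt_lshift.
pose n := #|{: 'I_m * 'I_e}|.
pose fj := fun (j : 'I_n) (x : M) =>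
  f (vert (lshift 2 (lshift P (enum_val j).1)) x) (enum_val j).2.
pose idx := fun j : 'I_n => (enum_val j).1.
pose bc := b0 (fun _ => witness M).
pose h := fun y : 'I_(k * e) => let il := decode y in
  match split il.1 with
  | inl i' => match split i' with
              | inl i'' => inl (enum_rank (i'', il.2))
              | inr _ => inr (f (vert il.1 (bc il.1)) il.2) end
  | inr _ => inr (f (vert il.1 (bc il.1)) il.2) end.
pose Y := fun z : 'I_n -> N =>
  (fun c : 'I_(k * e) -> N => E' (unflat c))
     (fun y => match h y with inl j => z j | inr c => c end).
exists n, fj, idx, Y; split; [by []|split].
  by apply: def_subst.
move=> a; rewrite HXE Hf3; last by move=> i; apply: D_vert.
rewrite /Y /=.
have -> : f \o (fun i : 'I_k => vert i (b0 a i)) = unflat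
  (fun y : 'I_(k * e) => f (vert (decode y).1 (b0 a (decode y).1)) (decode y).2).
  by rewrite (unflat_flat (fun i l => f (vert i (b0 a i)) l)).
have -> // : (fun y : 'I_(k * e) => f (vert (decode y).1 (b0 a (decode y).1)) (decode y).2)
  = (fun y => match h y with inl j => fj j (a (idx j)) | inr c => c end).
apply: functional_extensionality => y; rewrite /h.
case: (decode y) => i l /=.
case E1: (split i) => [i'|t]; have Hi := splitK i; rewrite E1 /= in Hi; rewrite -Hi.
- case E2: (split i') => [i''|t]; have Hi' := splitK i'; rewrite E2 /= in Hi'; rewrite -Hi'.
  + by rewrite /fj /idx enum_rankK /= /b0 !catt_lshift.
  + by rewrite /bc /b0 !catt_lshift !catt_rshift.
- by rewrite /bc /b0 !catt_rshift.
Qed.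

End Backward.

Theorem proposition2p10 (LM LN : signature) (M : structure LM) (N : structure LN) :
  (locally_trace_defines N M <->
   (forall (k d : nat) (D : ('I_d -> M) -> Prop) (E : ('I_k -> 'I_d -> M) -> Prop),
      2 <= k -> def_hypergraph D E ->
      exists (e : nat) (D' : ('I_e -> N) -> Prop) (E' : ('I_k -> 'I_e -> N) -> Prop),
        def_hypergraph D' E' /\ hyp_embeds D E D' E'))
  /\
  (locally_trace_defines N M <->
   (forall (k d : nat) (D : ('I_d -> M) -> Prop) (E : ('I_k -> 'I_d -> M) -> Prop),
      2 <= k -> zdef_hypergraph D E ->
      exists (e : nat) (D' : ('I_e -> N) -> Prop) (E' : ('I_k -> 'I_e -> N) -> Prop),
        zdef_hypergraph D' E' /\ hyp_embeds D E D' E')).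
Proof.
have zd2d : forall L (A : structure L) k d (D : ('I_d -> A) -> Prop) (E : ('I_k -> 'I_d -> A) -> Prop),
    zdef_hypergraph D E -> def_hypergraph D E.
  by move=> L A k d D E [H1 [H2 H3]]; split=> //; split; apply: zdef_def.
split; split.
- move=> H k d D E Hk HDE.
  have [e [D' [E' [H1 H2]]]] := @forward _ _ M N H k d D E Hk HDE.
  by exists e, D', E'; split=> //; apply: zd2d.
- move=> H; apply: backward => k d D E Hk HDE.
  have [e [D' [E' [[_ [_ H1]] H2]]]] := H k d D E Hk (zd2d _ _ _ _ _ _ HDE).
  by exists e, D', E'.
- move=> H k d D E Hk HDE.
  exact: @forward _ _ M N H k d D E Hk (zd2d _ _ _ _ _ _ HDE).
- move=> H; apply: backward => k d D E Hk HDE.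
  have [e [D' [E' [[_ [_ H1]] H2]]]] := H k d D E Hk HDE.
  by exists e, D', E'; split=> //; apply: zdef_def.
Qed.
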